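(* Let $\lambda_0,\dots,\lambda_n\in\mathbb{C}$ with $\lambda_0\neq\lambda_1$, $a\neq b$ real, and suppose $E_{(\lambda_0,\dots,\lambda_n)}$, $E_{(\lambda_0,\lambda_2,\dots,\lambda_n)}$, $E_{(\lambda_1,\dots,\lambda_n)}$ and $E_{(\lambda_2,\dots,\lambda_n)}$ are extended Chebyshev systems for $\{a,b\}$. Then for each $k=0,\dots,n-1$ there is a constant $C_k\neq0$ such that $$p_{(\lambda_0,\lambda_2,\dots,\lambda_n),k}-p_{(\lambda_1,\lambda_2,\dots,\lambda_n),k}=C_k\,p_{(\lambda_0,\lambda_1,\lambda_2,\dots,\lambda_n),k+1},$$ and $$\lim_{x\to b}\frac{p_{(\lambda_0,\lambda_2,\dots,\lambda_n),k}(x)}{p_{(\lambda_1,\dots,\lambda_n),k}(x)}\neq1.$$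
   Context: $E_{(\mu_0,\dots,\mu_m)}$ denotes the space of all $f\in C^\infty(\mathbb{R},\mathbb{C})$ with $(\frac{d}{dx}-\mu_0)\cdots(\frac{d}{dx}-\mu_m)f=0$ (dimension $m+1$). A zero of order (exactly) $k$ at $a$ means $f(a)=\dots=f^{(k-1)}(a)=0$, $f^{(k)}(a)\neq0$. $E_{(\mu_0,\dots,\mu_m)}$ is an extended Chebyshev system for $A\subset\mathbb{R}$ if every nonzero element has at most $m$ zeros in $A$ counted with multiplicity. In that case, for $A=\{a,b\}$, $a\ne b$, the Bernstein basis $p_{(\mu_0,\dots,\mu_m),k}$, $k=0,\dots,m$, is the unique family in $E_{(\mu_0,\dots,\mu_m)}$ with $p_{(\mu_0,\dots,\mu_m),k}$ having a zero of order exactly $k$ at $a$ and exactly $m-k$ at $b$, and $p^{(k)}_{(\mu_0,\dots,\mu_m),k}(a)=1$. *)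

(* Defs.v *)
From Stdlib Require Import Reals List Lia.
Open Scope R_scope.

Definition Cx := (R * R)%type.
Definition Czero : Cx := (0, 0).
Definition Cone : Cx := (1, 0).
Definition Cadd (z w : Cx) : Cx := (fst z + fst w, snd z + snd w).
Definition Copp (z : Cx) : Cx := (- fst z, - snd z).
Definition Csub (z w : Cx) : Cx := Cadd z (Copp w).
Definition Cmul (z w : Cx) : Cx :=
  (fst z * fst w - snd z * snd w, fst z * snd w + snd z * fst w).
Definition Cinv (z : Cx) : Cx :=
  let d := fst z * fst z + snd z * snd z in (fst z / d, - snd z / d).
Definition Cdiv (z w : Cx) : Cx := Cmul z (Cinv w).
Definition Cnorm (z : Cx) : R := sqrt (fst z * fst z + snd z * snd z).

(* D is the sequence of successive derivatives of f : R -> C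
   (D 0 = f, D (k+1) = (D k)'), derivatives taken componentwise;
   such a D exists iff f is C^infinity. *)
Definition smooth_with (f : R -> Cx) (D : nat -> R -> Cx) : Prop :=
  (forall x, D 0%nat x = f x) /\
  (forall (k : nat) (x : R),
      derivable_pt_lim (fun t => fst (D k t)) x (fst (D (S k) x)) /\
      derivable_pt_lim (fun t => snd (D k t)) x (snd (D (S k) x))).

(* Apply the differential operator (d/dx - mu_0)...(d/dx - mu_m) to a
   derivative sequence: the result is again a derivative sequence. *)
Fixpoint apply_ops (mus : list Cx) (D : nat -> R -> Cx) : nat -> R -> Cx :=
  match mus with
  | nil => D
  | mu :: rest =>
      let G := apply_ops rest D in
      fun k x => Csub (G (S k) x) (Cmul mu (G k x))
  end.

Definition in_E (mus : list Cx) (f : R -> Cx) : Prop :=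
  exists D, smooth_with f D /\ forall x, apply_ops mus D 0%nat x = Czero.

(* E_mus is an extended Chebyshev system for {a,b}: every nonzero element
   has at most m = length mus - 1 zeros in {a,b} counted with multiplicity,
   i.e. if it vanishes to order >= ka at a and >= kb at b then ka + kb <= m. *)
Definition ECT2 (mus : list Cx) (a b : R) : Prop :=
  forall f, in_E mus f -> (exists x, f x <> Czero) ->
  forall D (ka kb : nat), smooth_with f D ->
    (forall j, (j < ka)%nat -> D j a = Czero) ->
    (forall j, (j < kb)%nat -> D j b = Czero) ->
    (ka + kb < length mus)%nat.

(* p is the k-th Bernstein basis element p_{mus,k} of E_mus w.r.t. {a,b}:
   p in E_mus, zero of order exactly k at a with p^(k)(a) = 1, and zero of
   order exactly m - k at b, where m = length mus - 1. *)
Definition bernstein (mus : list Cx) (a b : R) (k : nat) (p : R -> Cx) : Prop :=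
  let m := pred (length mus) in
  (k <= m)%nat /\
  exists D, smooth_with p D /\ (forall x, apply_ops mus D 0%nat x = Czero) /\
    (forall j, (j < k)%nat -> D j a = Czero) /\ D k a = Cone /\
    (forall j, (j < m - k)%nat -> D j b = Czero) /\ D (m - k)%nat b <> Czero.

Definition climit (g : R -> Cx) (b : R) (L : Cx) : Prop :=
  forall eps, 0 < eps -> exists delta, 0 < delta /\
    forall x, x <> b -> Rabs (x - b) < delta -> Cnorm (Csub (g x) L) < eps.

(* Main.v *)
Require Import Defs.
From Stdlib Require Import Reals List Lia Lra Classical FunctionalExtensionality Factorial.
Open Scope R_scope.

Ltac cx := unfold Csub, Cadd, Copp, Cmul, Czero, Cone, Cinv, Cdiv in *; simpl in *.

Definition DS (D : nat -> R -> Cx) : Prop := forall k x,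
  derivable_pt_lim (fun t => fst (D k t)) x (fst (D (S k) x)) /\
  derivable_pt_lim (fun t => snd (D k t)) x (snd (D (S k) x)).

Lemma smooth_DS f D : smooth_with f D -> DS D.
Proof. intros [_ H]; exact H. Qed.

Lemma deriv_ext (f g : R -> R) x l : (forall t, f t = g t) -> derivable_pt_lim f x l -> derivable_pt_lim g x l.
Proof. intros H; replace g with f; auto. apply functional_extensionality; auto. Qed.

Lemma pair_eq (z : Cx) : z = (fst z, snd z).
Proof. destruct z; reflexivity. Qed.

Lemma DS_zero H : DS H -> (forall x, H 0%nat x = Czero) -> forall k x, H k x = Czero.
Proof.
  intros HD H0 k; induction k; intros x; [apply H0|].
  destruct (HD k x) as [H1 H2].
  assert (E1 : fst (H (S k) x) = 0).
  { apply (uniqueness_limite (fun t => fst (H k t)) x); auto.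
    apply deriv_ext with (fun _ => 0). intros t; rewrite IHk; reflexivity.
    apply derivable_pt_lim_const. }
  assert (E2 : snd (H (S k) x) = 0).
  { apply (uniqueness_limite (fun t => snd (H k t)) x); auto.
    apply deriv_ext with (fun _ => 0). intros t; rewrite IHk; reflexivity.
    apply derivable_pt_lim_const. }
  rewrite (pair_eq (H (S k) x)), E1, E2; reflexivity.
Qed.

Lemma dlin1 (f1 f2 f3 : R -> R) a b l1 l2 l3 x :
  derivable_pt_lim f1 x l1 -> derivable_pt_lim f2 x l2 -> derivable_pt_lim f3 x l3 ->
  derivable_pt_lim (fun t => f1 t + - (a * f2 t - b * f3 t)) x (l1 + - (a * l2 - b * l3)).
Proof.
  intros H1 H2 H3.
  change (fun t => f1 t + - (a * f2 t - b * f3 t)) with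
    (plus_fct f1 (opp_fct (minus_fct (mult_real_fct a f2) (mult_real_fct b f3)))).
  apply derivable_pt_lim_plus; auto. apply derivable_pt_lim_opp.
  apply derivable_pt_lim_minus; apply derivable_pt_lim_scal; auto.
Qed.

Lemma dlin2 (f1 f2 f3 : R -> R) a b l1 l2 l3 x :
  derivable_pt_lim f1 x l1 -> derivable_pt_lim f2 x l2 -> derivable_pt_lim f3 x l3 ->
  derivable_pt_lim (fun t => f1 t + - (a * f2 t + b * f3 t)) x (l1 + - (a * l2 + b * l3)).
Proof.
  intros H1 H2 H3.
  change (fun t => f1 t + - (a * f2 t + b * f3 t)) with
    (plus_fct f1 (opp_fct (plus_fct (mult_real_fct a f2) (mult_real_fct b f3)))).
  apply derivable_pt_lim_plus; auto. apply derivable_pt_lim_opp.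
  apply derivable_pt_lim_plus; apply derivable_pt_lim_scal; auto.
Qed.

Lemma DS_lin D1 D2 c : DS D1 -> DS D2 -> DS (fun k x => Csub (D1 k x) (Cmul c (D2 k x))).
Proof.
  intros H1 H2 k x. destruct (H1 k x) as [A1 B1]; destruct (H2 k x) as [A2 B2].
  unfold Csub, Cadd, Copp, Cmul; simpl. split.
  - apply (dlin1 (fun t => fst (D1 k t)) (fun t => fst (D2 k t)) (fun t => snd (D2 k t))); auto.
  - apply (dlin2 (fun t => snd (D1 k t)) (fun t => snd (D2 k t)) (fun t => fst (D2 k t))); auto.
Qed.

Lemma ops_DS L D : DS D -> DS (apply_ops L D).
Proof.
  intros HD; induction L as [|mu L IH]; simpl; auto.
  apply DS_lin; auto. intros k x; apply (IH (S k) x).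
Qed.

Lemma cid1 u1 u2 v1 v2 c mu :
  Csub (Csub u1 (Cmul c v1)) (Cmul mu (Csub u2 (Cmul c v2))) =
  Csub (Csub u1 (Cmul mu u2)) (Cmul c (Csub v1 (Cmul mu v2))).
Proof. destruct u1, u2, v1, v2, c, mu; cx; f_equal; ring. Qed.

Lemma ops_lin L D1 D2 c k x :
  apply_ops L (fun k x => Csub (D1 k x) (Cmul c (D2 k x))) k x =
  Csub (apply_ops L D1 k x) (Cmul c (apply_ops L D2 k x)).
Proof.
  revert k x; induction L as [|mu L IH]; intros k x; simpl; auto.
  rewrite !IH. apply cid1.
Qed.

Lemma cid2 g0 g1 g2 l0 l1 :
  Csub (Csub g2 (Cmul l1 g1)) (Cmul l0 (Csub g1 (Cmul l1 g0))) =
  Csub (Csub g2 (Cmul l0 g1)) (Cmul l1 (Csub g1 (Cmul l0 g0))).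
Proof. destruct g0, g1, g2, l0, l1; cx; f_equal; ring. Qed.

Lemma ops_comm l0 l1 M D k x :
  apply_ops (l0 :: l1 :: M) D k x = apply_ops (l1 :: l0 :: M) D k x.
Proof. simpl. apply cid2. Qed.

Lemma csub0 mu : Csub Czero (Cmul mu Czero) = Czero.
Proof. destruct mu; cx; f_equal; ring. Qed.

Lemma P_cons mu L D : DS D -> (forall x, apply_ops L D 0%nat x = Czero) ->
  forall x, apply_ops (mu :: L) D 0%nat x = Czero.
Proof.
  intros HD HP x. pose proof (DS_zero _ (ops_DS L D HD) HP) as Z.
  simpl. rewrite !Z. apply csub0.
Qed.

Lemma cmul_eq0 z w : Cmul z w = Czero -> z <> Czero -> w = Czero.
Proof.
  destruct z as [z1 z2], w as [w1 w2]; cx; intros H Hz.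
  injection H as H1 H2.
  assert (Hd : z1 * z1 + z2 * z2 <> 0).
  { intro E. apply Hz. assert (z1 = 0) by nra. assert (z2 = 0) by nra. subst; reflexivity. }
  assert (E1 : (z1*z1+z2*z2) * w1 = 0).
  { replace ((z1*z1+z2*z2) * w1) with (z1 * (z1 * w1 - z2 * w2) + z2 * (z1 * w2 + z2 * w1)) by ring.
    rewrite H1, H2; ring. }
  assert (E2 : (z1*z1+z2*z2) * w2 = 0).
  { replace ((z1*z1+z2*z2) * w2) with (z1 * (z1 * w2 + z2 * w1) - z2 * (z1 * w1 - z2 * w2)) by ring.
    rewrite H1, H2; ring. }
  apply Rmult_integral in E1; apply Rmult_integral in E2.
  destruct E1; [contradiction|]; destruct E2; [contradiction|]; subst; reflexivity.
Qed.

Lemma cmul_nz z w : z <> Czero -> w <> Czero -> Cmul z w <> Czero.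
Proof. intros Hz Hw H. apply Hw. exact (cmul_eq0 z w H Hz). Qed.

Lemma csub_nz l0 l1 : l0 <> l1 -> Csub l1 l0 <> Czero.
Proof.
  destruct l0 as [a1 a2], l1 as [b1 b2]; cx; intros H E; injection E as E1 E2.
  apply H; f_equal; lra.
Qed.

Lemma P_inter l0 l1 M D : DS D -> l0 <> l1 ->
  (forall x, apply_ops (l0 :: M) D 0%nat x = Czero) ->
  (forall x, apply_ops (l1 :: M) D 0%nat x = Czero) ->
  forall x, apply_ops M D 0%nat x = Czero.
Proof.
  intros HD Hl H0 H1 x. specialize (H0 x); specialize (H1 x); simpl in *.
  apply (cmul_eq0 (Csub l1 l0)); [|apply csub_nz; auto].
  revert H0 H1. destruct (apply_ops M D 1%nat x), (apply_ops M D 0%nat x), l0, l1; cx.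
  intros E0 E1; injection E0 as A B; injection E1 as C D'; f_equal; lra.
Qed.

Lemma csub_eq u v : Csub u (Cmul Cone v) = Czero -> u = v.
Proof. destruct u, v; cx; intro E; injection E as A B; f_equal; lra. Qed.

Lemma cone_nz : Cone <> Czero.
Proof. cx; intro E; injection E; lra. Qed.

Lemma nonzero f D k y : smooth_with f D -> D k y <> Czero -> exists x, f x <> Czero.
Proof.
  intros [H0 HD] Hk. apply NNPP; intro N. apply Hk.
  apply DS_zero; auto. intros x; rewrite H0. apply NNPP; intro N'; apply N; eauto.
Qed.
Lemma dpow b j x : derivable_pt_lim (fun t => (t - b) ^ (S j)) x (INR (S j) * (x - b) ^ j).
Proof.
  pose proof (derivable_pt_lim_comp (fun t => t - b) (fun y => y ^ (S j)) x 1 (INR (S j) * (x - b) ^ j)) as H.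
  replace (INR (S j) * (x - b) ^ j) with (INR (S j) * (x - b) ^ j * 1) by ring.
  apply H.
  - replace 1 with (1 - 0) by ring. apply derivable_pt_lim_minus.
    apply derivable_pt_lim_id. apply derivable_pt_lim_const.
  - apply derivable_pt_lim_pow.
Qed.

Lemma taylor0 j : forall (H : nat -> R -> R) b,
  (forall k x, derivable_pt_lim (H k) x (H (S k) x)) ->
  (forall i, (i < j)%nat -> H i b = 0) ->
  forall eps, 0 < eps -> exists delta, 0 < delta /\ forall x, Rabs (x - b) < delta ->
    Rabs (H 0%nat x - H j b / INR (fact j) * (x - b) ^ j) <= eps * Rabs (x - b) ^ j.
Proof.
  induction j as [|j IH]; intros H b HD HZ eps He.
  - assert (Hc : continuity_pt (H 0%nat) b).
    { apply derivable_continuous_pt. exists (H 1%nat b). apply HD. }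
    destruct (Hc eps He) as [d [Hd Hx]].
    exists d; split; auto. intros x Hxd. simpl. 
    destruct (Req_dec x b) as [->|Hxb].
    + replace (H 0%nat b - H 0%nat b / 1 * 1) with 0 by field. rewrite Rabs_R0; lra.
    + specialize (Hx x (conj (conj I (not_eq_sym Hxb)) Hxd)). simpl in Hx. unfold Rdist in Hx.
      replace (H 0%nat x - H 0%nat b / 1 * 1) with (H 0%nat x - H 0%nat b) by field. lra.
  - destruct (IH (fun k => H (S k)) b (fun k x => HD (S k) x)
      (fun i Hi => HZ (S i) ltac:(lia)) eps He) as [d [Hd Hx]].
    exists d; split; auto. intros x Hxd.
    set (c := H (S j) b / INR (fact (S j))).
    set (phi := fun t => H 0%nat t - c * (t - b) ^ (S j)).
    set (phi' := fun t => H 1%nat t - c * (INR (S j) * (t - b) ^ j)).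
    assert (Hphi : forall t, derivable_pt_lim phi t (phi' t)).
    { intros t. unfold phi, phi'.
      change (fun t0 => H 0%nat t0 - c * (t0 - b) ^ S j) with
        (minus_fct (H 0%nat) (mult_real_fct c (fun t0 => (t0 - b) ^ S j))).
      apply derivable_pt_lim_minus. apply HD. apply derivable_pt_lim_scal. apply dpow. }
    assert (Hfact : INR (fact (S j)) = INR (S j) * INR (fact j)).
    { rewrite fact_simpl, mult_INR. reflexivity. }
    assert (Hfj : INR (fact j) <> 0) by (apply not_0_INR; apply fact_neq_0).
    assert (HSj : INR (S j) <> 0) by (apply not_0_INR; lia).
    assert (Hcc : c * INR (S j) = H (S j) b / INR (fact j)).
    { unfold c. rewrite Hfact. field. auto. }
    assert (Hp' : forall t, Rabs (t - b) < d -> Rabs (phi' t) <= eps * Rabs (t - b) ^ j).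
    { intros t Ht. specialize (Hx t Ht). simpl in Hx. unfold phi'.
      replace (H 1%nat t - c * (INR (S j) * (t - b) ^ j)) with
        (H 1%nat t - H (S j) b / INR (fact j) * (t - b) ^ j); auto.
      rewrite <- Hcc; ring. }
    assert (Hphib : phi b = 0).
    { unfold phi. rewrite (HZ 0%nat ltac:(lia)). simpl. ring. }
    assert (Hgoal : Rabs (phi x) <= eps * Rabs (x - b) ^ S j).
    { destruct (Rtotal_order x b) as [Hlt|[Heq|Hgt]].
      - destruct (MVT_cor2 phi phi' x b Hlt (fun c0 _ => Hphi c0)) as [c0 [E [Hc1 Hc2]]].
        rewrite Hphib in E.
        assert (Hc0 : Rabs (c0 - b) < d).
        { rewrite Rabs_left by lra. rewrite Rabs_left in Hxd by lra. lra. }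
        specialize (Hp' c0 Hc0).
        replace (phi x) with (- (phi' c0 * (b - x))) by lra.
        rewrite Rabs_Ropp, Rabs_mult. simpl.
        replace (Rabs (b - x)) with (Rabs (x - b)) by (rewrite <- Rabs_Ropp; f_equal; ring).
        assert (Rabs (c0 - b) ^ j <= Rabs (x - b) ^ j).
        { apply pow_incr. split. apply Rabs_pos.
          rewrite !Rabs_left by lra. lra. }
        assert (0 <= Rabs (x - b)) by apply Rabs_pos.
        assert (0 <= eps * Rabs (c0 - b) ^ j).
        { apply Rmult_le_pos; [lra|]. apply pow_le, Rabs_pos. }
        apply Rle_trans with (eps * Rabs (c0 - b) ^ j * Rabs (x - b)).
        apply Rmult_le_compat_r; auto.
        rewrite (Rmult_comm (Rabs (x - b))), <- Rmult_assoc.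
        apply Rmult_le_compat_r; auto. apply Rmult_le_compat_l; lra.
      - subst. rewrite Hphib, Rabs_R0. apply Rmult_le_pos; [lra|]. apply pow_le, Rabs_pos.
      - destruct (MVT_cor2 phi phi' b x Hgt (fun c0 _ => Hphi c0)) as [c0 [E [Hc1 Hc2]]].
        rewrite Hphib in E.
        assert (Hc0 : Rabs (c0 - b) < d).
        { rewrite Rabs_right by lra. rewrite Rabs_right in Hxd by lra. lra. }
        specialize (Hp' c0 Hc0).
        replace (phi x) with (phi' c0 * (x - b)) by lra.
        rewrite Rabs_mult. simpl.
        assert (Rabs (c0 - b) ^ j <= Rabs (x - b) ^ j).
        { apply pow_incr. split. apply Rabs_pos.
          rewrite !Rabs_right by lra. lra. }
        assert (0 <= Rabs (x - b)) by apply Rabs_pos.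
        assert (0 <= eps * Rabs (c0 - b) ^ j).
        { apply Rmult_le_pos; [lra|]. apply pow_le, Rabs_pos. }
        apply Rle_trans with (eps * Rabs (c0 - b) ^ j * Rabs (x - b)).
        apply Rmult_le_compat_r; auto.
        rewrite (Rmult_comm (Rabs (x - b))), <- Rmult_assoc.
        apply Rmult_le_compat_r; auto. apply Rmult_le_compat_l; lra. }
    exact Hgoal.
Qed.
Lemma taylor_lim j (H : nat -> R -> R) b :
  (forall k x, derivable_pt_lim (H k) x (H (S k) x)) ->
  (forall i, (i < j)%nat -> H i b = 0) ->
  limit1_in (fun x => H 0%nat x / (x - b) ^ j) (fun x => x <> b) (H j b / INR (fact j)) b.
Proof.
  intros HD HZ eps He.
  destruct (taylor0 j H b HD HZ (eps / 2) ltac:(lra)) as [d [Hd Hx]].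
  exists d; split; auto. intros x [Hxb Hxd]. simpl in *. unfold Rdist in *.
  specialize (Hx x Hxd).
  assert (Ht : (x - b) ^ j <> 0) by (apply pow_nonzero; lra).
  assert (HT : 0 < Rabs ((x - b) ^ j)) by (apply Rabs_pos_lt; auto).
  assert (HF : INR (fact j) <> 0) by (apply not_0_INR; apply fact_neq_0).
  replace (H 0%nat x / (x - b) ^ j - H j b / INR (fact j)) with
    ((H 0%nat x - H j b / INR (fact j) * (x - b) ^ j) * / (x - b) ^ j) by (field; auto).
  rewrite Rabs_mult, Rabs_inv. rewrite RPow_abs in Hx.
  apply Rle_lt_trans with (eps / 2); [|lra].
  apply Rmult_le_reg_r with (Rabs ((x - b) ^ j)); auto.
  replace (Rabs (H 0%nat x - H j b / INR (fact j) * (x - b) ^ j) * / Rabs ((x - b) ^ j) *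
    Rabs ((x - b) ^ j)) with (Rabs (H 0%nat x - H j b / INR (fact j) * (x - b) ^ j)) by (field; lra).
  exact Hx.
Qed.

Definition Cscale (t : R) (z : Cx) : Cx := (t * fst z, t * snd z).

Lemma cinv0 : Cinv (0, 0) = (0, 0).
Proof. unfold Cinv; simpl; f_equal; unfold Rdiv; ring. Qed.

Lemma Cdiv_scale t z w : t <> 0 -> Cdiv (Cscale t z) (Cscale t w) = Cdiv z w.
Proof.
  intros Ht. destruct z as [z1 z2], w as [w1 w2]. unfold Cscale; simpl.
  destruct (Req_dec (w1 * w1 + w2 * w2) 0) as [E|E].
  - assert (w1 = 0) by nra. assert (w2 = 0) by nra. subst.
    replace (t * 0) with 0 by ring. unfold Cdiv. rewrite cinv0. unfold Cmul; simpl; f_equal; ring.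
  - assert (E' : t * w1 * (t * w1) + t * w2 * (t * w2) <> 0).
    { replace (t * w1 * (t * w1) + t * w2 * (t * w2)) with (t * t * (w1 * w1 + w2 * w2)) by ring.
      apply Rmult_integral_contrapositive; split; auto. }
    unfold Cdiv, Cmul, Cinv; simpl; f_equal; field; auto.
Qed.

Lemma cdiv_limit (f1 f2 g1 g2 : R -> R) Dm x0 A1 A2 B1 B2 :
  limit1_in f1 Dm A1 x0 -> limit1_in f2 Dm A2 x0 ->
  limit1_in g1 Dm B1 x0 -> limit1_in g2 Dm B2 x0 -> B1 * B1 + B2 * B2 <> 0 ->
  limit1_in (fun x => fst (Cdiv (f1 x, f2 x) (g1 x, g2 x))) Dm (fst (Cdiv (A1, A2) (B1, B2))) x0 /\
  limit1_in (fun x => snd (Cdiv (f1 x, f2 x) (g1 x, g2 x))) Dm (snd (Cdiv (A1, A2) (B1, B2))) x0.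
Proof.
  intros H1 H2 H3 H4 HB.
  assert (Hd : limit1_in (fun x => / (g1 x * g1 x + g2 x * g2 x)) Dm (/ (B1 * B1 + B2 * B2)) x0).
  { apply limit_inv; auto. apply limit_plus; apply limit_mul; auto. }
  unfold Cdiv, Cmul, Cinv; simpl. unfold Rdiv. split.
  - apply limit_minus; apply limit_mul; auto; try apply limit_mul; auto. apply limit_Ropp; auto.
  - apply limit_plus; apply limit_mul; auto; try apply limit_mul; auto. apply limit_Ropp; auto.
Qed.

Lemma climit_comp (g : R -> Cx) b L :
  limit1_in (fun x => fst (g x)) (fun x => x <> b) (fst L) b ->
  limit1_in (fun x => snd (g x)) (fun x => x <> b) (snd L) b ->
  climit g b L.
Proof.
  intros H1 H2 eps He.
  destruct (H1 (eps / 2) ltac:(lra)) as [d1 [Hd1 X1]].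
  destruct (H2 (eps / 2) ltac:(lra)) as [d2 [Hd2 X2]].
  exists (Rmin d1 d2); split. apply Rmin_pos; auto.
  intros x Hxb Hx.
  assert (Hx1 : Rabs (x - b) < d1) by (eapply Rlt_le_trans; [exact Hx|apply Rmin_l]).
  assert (Hx2 : Rabs (x - b) < d2) by (eapply Rlt_le_trans; [exact Hx|apply Rmin_r]).
  specialize (X1 x (conj Hxb Hx1)); specialize (X2 x (conj Hxb Hx2)). simpl in *; unfold Rdist in *.
  unfold Cnorm, Csub, Cadd, Copp; simpl.
  set (u := fst (g x) + - fst L) in *. set (v := snd (g x) + - snd L) in *.
  assert (Hu : Rabs u < eps / 2) by (unfold u; exact X1).
  assert (Hv : Rabs v < eps / 2) by (unfold v; exact X2).
  rewrite <- (sqrt_square eps) by lra.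
  apply sqrt_lt_1_alt. split. nra.
  apply Rabs_def2 in Hu; apply Rabs_def2 in Hv. nra.
Qed.

Lemma climit_ext (g h : R -> Cx) b L : (forall x, x <> b -> g x = h x) -> climit h b L -> climit g b L.
Proof.
  intros E H eps He. destruct (H eps He) as [d [Hd X]]. exists d; split; auto.
  intros x Hxb Hx. rewrite E; auto.
Qed.

Lemma climit_ratio (D1 D2 : nat -> R -> Cx) b j :
  DS D1 -> DS D2 -> (forall i, (i < j)%nat -> D1 i b = Czero) ->
  (forall i, (i < j)%nat -> D2 i b = Czero) -> D2 j b <> Czero ->
  climit (fun x => Cdiv (D1 0%nat x) (D2 0%nat x)) b (Cdiv (D1 j b) (D2 j b)).
Proof.
  intros H1 H2 Z1 Z2 Nz.
  set (F := INR (fact j)).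
  assert (HF : F <> 0) by (apply not_0_INR; apply fact_neq_0).
  assert (L11 := taylor_lim j (fun k t => fst (D1 k t)) b (fun k x => proj1 (H1 k x))
    (fun i Hi => f_equal fst (Z1 i Hi))).
  assert (L12 := taylor_lim j (fun k t => snd (D1 k t)) b (fun k x => proj2 (H1 k x))
    (fun i Hi => f_equal snd (Z1 i Hi))).
  assert (L21 := taylor_lim j (fun k t => fst (D2 k t)) b (fun k x => proj1 (H2 k x))
    (fun i Hi => f_equal fst (Z2 i Hi))).
  assert (L22 := taylor_lim j (fun k t => snd (D2 k t)) b (fun k x => proj2 (H2 k x))
    (fun i Hi => f_equal snd (Z2 i Hi))).
  simpl in L11, L12, L21, L22.
  assert (HB : fst (D2 j b) / F * (fst (D2 j b) / F) + snd (D2 j b) / F * (snd (D2 j b) / F) <> 0).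
  { intro E. apply Nz. rewrite (pair_eq (D2 j b)).
    assert (fst (D2 j b) / F = 0) by nra. assert (snd (D2 j b) / F = 0) by nra.
    unfold Czero; f_equal.
    replace (fst (D2 j b)) with (F * (fst (D2 j b) / F)) by (field; auto). rewrite H; ring.
    replace (snd (D2 j b)) with (F * (snd (D2 j b) / F)) by (field; auto). rewrite H0; ring. }
  destruct (cdiv_limit _ _ _ _ _ _ _ _ _ _ L11 L12 L21 L22 HB) as [Lf Ls].
  replace (Cdiv (D1 j b) (D2 j b)) with
    (Cdiv (fst (D1 j b) / F, snd (D1 j b) / F) (fst (D2 j b) / F, snd (D2 j b) / F)).
  2:{ rewrite <- (Cdiv_scale F) by auto. unfold Cscale; simpl.
      rewrite (pair_eq (D1 j b)) at 3. rewrite (pair_eq (D2 j b)) at 3.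
      f_equal; f_equal; field; auto. }
  eapply climit_ext; [|apply climit_comp; [exact Lf|exact Ls]].
  intros x Hxb. simpl.
  assert (Ht : (x - b) ^ j <> 0) by (apply pow_nonzero; lra).
  transitivity (Cdiv (Cscale ((x - b) ^ j) (fst (D1 0%nat x) / (x - b) ^ j, snd (D1 0%nat x) / (x - b) ^ j))
     (Cscale ((x - b) ^ j) (fst (D2 0%nat x) / (x - b) ^ j, snd (D2 0%nat x) / (x - b) ^ j))).
  2: apply Cdiv_scale; auto.
  unfold Cscale; simpl.
  rewrite (pair_eq (D1 0%nat x)) at 1. rewrite (pair_eq (D2 0%nat x)) at 1.
  f_equal; f_equal; field; auto.
Qed.

Lemma cmul1 w : Cmul Cone w = w.
Proof. destruct w; cx; f_equal; ring. Qed.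

Lemma cdiv_one z w : Cdiv z w = Cone -> w <> Czero -> z = w.
Proof.
  destruct z as [z1 z2], w as [w1 w2]; intros E Hw.
  assert (Hd : w1 * w1 + w2 * w2 <> 0).
  { intro E'. apply Hw. assert (w1 = 0) by nra. assert (w2 = 0) by nra. subst; reflexivity. }
  unfold Cdiv, Cmul, Cinv, Cone in E; simpl in E. injection E as E1 E2.
  assert (A : z1 * w1 + z2 * w2 = w1 * w1 + w2 * w2).
  { apply (Rmult_eq_reg_r (/ (w1 * w1 + w2 * w2))); [|apply Rinv_neq_0_compat; auto].
    rewrite Rinv_r by auto. rewrite <- E1. field; auto. }
  assert (B : z2 * w1 - z1 * w2 = 0).
  { apply (Rmult_eq_reg_r (/ (w1 * w1 + w2 * w2))); [|apply Rinv_neq_0_compat; auto].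
    rewrite Rmult_0_l. rewrite <- E2. field; auto. }
  assert (C1 : (z1 - w1) * (w1 * w1 + w2 * w2) = 0).
  { replace ((z1 - w1) * (w1 * w1 + w2 * w2)) with (w1 * (z1 * w1 + z2 * w2 - (w1*w1+w2*w2)) - w2 * (z2 * w1 - z1 * w2)) by ring.
    rewrite A, B; ring. }
  assert (C2 : (z2 - w2) * (w1 * w1 + w2 * w2) = 0).
  { replace ((z2 - w2) * (w1 * w1 + w2 * w2)) with (w2 * (z1 * w1 + z2 * w2 - (w1*w1+w2*w2)) + w1 * (z2 * w1 - z1 * w2)) by ring.
    rewrite A, B; ring. }
  apply Rmult_integral in C1; apply Rmult_integral in C2.
  destruct C1 as [C1|C1]; [|contradiction]; destruct C2 as [C2|C2]; [|contradiction].
  f_equal; lra.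
Qed.

Theorem mainTheorem11 (lam : nat -> Cx) (n : nat) (a b : R) :
  (1 <= n)%nat ->
  lam 0%nat <> lam 1%nat ->
  a <> b ->
  ECT2 (map lam (seq 0 (S n))) a b ->
  ECT2 (lam 0%nat :: map lam (seq 2 (n - 1))) a b ->
  ECT2 (map lam (seq 1 n)) a b ->
  ECT2 (map lam (seq 2 (n - 1))) a b ->
  forall k : nat, (k < n)%nat ->
  forall p02 p1 q : R -> Cx,
    bernstein (lam 0%nat :: map lam (seq 2 (n - 1))) a b k p02 ->
    bernstein (map lam (seq 1 n)) a b k p1 ->
    bernstein (map lam (seq 0 (S n))) a b (S k) q ->
    (exists Ck : Cx, Ck <> Czero /\ forall x, Csub (p02 x) (p1 x) = Cmul Ck (q x)) /\
    (exists L : Cx, L <> Cone /\ climit (fun x => Cdiv (p02 x) (p1 x)) b L).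
Proof.
  intros Hn Hl Hab E0 E02 E1 EM k Hk p02 p1 q B02 B1 Bq.
  set (M := map lam (seq 2 (n - 1))) in *.
  assert (HM : length M = (n - 1)%nat) by (unfold M; rewrite length_map, length_seq; reflexivity).
  assert (HL1 : map lam (seq 1 n) = lam 1%nat :: M).
  { unfold M. destruct n as [|n']; [lia|]. replace (S n' - 1)%nat with n' by lia. reflexivity. }
  assert (HL0 : map lam (seq 0 (S n)) = lam 0%nat :: lam 1%nat :: M).
  { rewrite <- HL1. reflexivity. }
  rewrite HL0 in E0, Bq. rewrite HL1 in E1, B1.
  unfold bernstein in B02, B1, Bq. simpl length in B02, B1, Bq, E0, E02, E1.
  simpl pred in B02, B1, Bq. rewrite HM in B02, B1, Bq.
  destruct B02 as [_ [D02 [S02 [P02 [Za02 [Ka02 [Zb02 Nb02]]]]]]].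
  destruct B1 as [_ [D1 [S1 [P1 [Za1 [Ka1 [Zb1 Nb1]]]]]]].
  destruct Bq as [_ [Dq [Sq [Pq [Zaq [Kaq [Zbq Nbq]]]]]]].
  set (j := (n - 1 - k)%nat) in *.
  replace (S (n - 1) - S k)%nat with j in Zbq, Nbq by (unfold j; lia).
  set (l0 := lam 0%nat) in *. set (l1 := lam 1%nat) in *.
  assert (DS02 := smooth_DS _ _ S02). assert (DS1 := smooth_DS _ _ S1). assert (DSq := smooth_DS _ _ Sq).
  assert (Pa02 : forall x, apply_ops (l0 :: l1 :: M) D02 0%nat x = Czero).
  { intros x. rewrite ops_comm. apply P_cons; auto. }
  assert (Pa1 : forall x, apply_ops (l0 :: l1 :: M) D1 0%nat x = Czero).
  { apply P_cons; auto. }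
  set (Dg := fun k x => Csub (D02 k x) (Cmul Cone (D1 k x))).
  assert (DSg : DS Dg) by (apply DS_lin; auto).
  assert (Pag : forall x, apply_ops (l0 :: l1 :: M) Dg 0%nat x = Czero).
  { intros x; unfold Dg; rewrite ops_lin, Pa02, Pa1; apply csub0. }
  assert (Sg : smooth_with (fun x => Dg 0%nat x) Dg) by (split; auto).
  assert (Dgz_a : forall i, (i < S k)%nat -> Dg i a = Czero).
  { intros i Hi. unfold Dg. destruct (Nat.eq_dec i k) as [->|Hik].
    rewrite Ka02, Ka1, cmul1. cx; f_equal; ring.
    rewrite Za02, Za1 by lia. apply csub0. }
  assert (Dgz_b : forall i, (i < j)%nat -> Dg i b = Czero).
  { intros i Hi. unfold Dg. rewrite Zb02, Zb1 by lia. apply csub0. }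
  assert (NZg : exists x, Dg 0%nat x <> Czero).
  { apply NNPP; intro N.
    assert (Z : forall k x, Dg k x = Czero).
    { apply DS_zero; auto. intros x; apply NNPP; intro N'; apply N; eauto. }
    assert (Eq : D02 = D1).
    { apply functional_extensionality; intro i; apply functional_extensionality; intro x.
      apply csub_eq. exact (Z i x). }
    assert (PM : forall x, apply_ops M D02 0%nat x = Czero).
    { apply (P_inter l0 l1); auto. rewrite Eq; auto. }
    assert (NZ02 : exists x, p02 x <> Czero) by (eapply nonzero; [exact S02|rewrite Ka02; apply cone_nz]).
    pose proof (EM p02 (ex_intro _ D02 (conj S02 PM)) NZ02 D02 k j S02 Za02 Zb02).
    rewrite HM in H. unfold j in H. lia. }
  set (C := Dg (S k) a).
  assert (HC : C <> Czero).
  { intro HC0.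
    pose proof (E0 (fun x => Dg 0%nat x) (ex_intro _ Dg (conj Sg Pag)) NZg Dg (S (S k)) j Sg) as H.
    assert (S (S k) + j < S (S (length M)))%nat.
    { apply H. intros i Hi. destruct (Nat.eq_dec i (S k)) as [->|Hik]; auto. apply Dgz_a; lia.
      exact Dgz_b. }
    rewrite HM in H0. unfold j in H0. lia. }
  set (Dh := fun k x => Csub (Dg k x) (Cmul C (Dq k x))).
  assert (DSh : DS Dh) by (apply DS_lin; auto).
  assert (Pah : forall x, apply_ops (l0 :: l1 :: M) Dh 0%nat x = Czero).
  { intros x; unfold Dh; rewrite ops_lin, Pag, Pq; apply csub0. }
  assert (Zh : forall k x, Dh k x = Czero).
  { apply DS_zero; auto. intros x. apply NNPP; intro N.
    assert (NZh : exists x, Dh 0%nat x <> Czero) by eauto.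
    assert (Sh : smooth_with (fun x => Dh 0%nat x) Dh) by (split; auto).
    pose proof (E0 (fun x => Dh 0%nat x) (ex_intro _ Dh (conj Sh Pah)) NZh Dh (S (S k)) j Sh) as H.
    assert (S (S k) + j < S (S (length M)))%nat.
    { apply H.
      - intros i Hi. unfold Dh. destruct (Nat.eq_dec i (S k)) as [->|Hik].
        + rewrite Kaq. fold C. destruct C; cx; f_equal; ring.
        + rewrite Dgz_a, Zaq by lia. apply csub0.
      - intros i Hi. unfold Dh. rewrite Dgz_b, Zbq by lia. apply csub0. }
    rewrite HM in H0. unfold j in H0. lia. }
  assert (Hgq : forall k x, Dg k x = Cmul C (Dq k x)).
  { intros i x. specialize (Zh i x). unfold Dh in Zh. revert Zh.
    destruct (Dg i x), (Cmul C (Dq i x)); cx; intro E; injection E as Ee1 Ee2; f_equal; lra. }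
  split.
  - exists C; split; auto. intros x.
    rewrite <- (proj1 S02 x), <- (proj1 S1 x), <- (proj1 Sq x), <- Hgq.
    unfold Dg. rewrite cmul1. reflexivity.
  - exists (Cdiv (D02 j b) (D1 j b)). split.
    + intro E. apply cdiv_one in E; auto.
      apply (cmul_nz C (Dq j b)); auto. rewrite <- Hgq. unfold Dg. rewrite E, cmul1.
      destruct (D1 j b); cx; f_equal; ring.
    + replace (fun x => Cdiv (p02 x) (p1 x)) with (fun x => Cdiv (D02 0%nat x) (D1 0%nat x)).
      2:{ apply functional_extensionality; intro x. rewrite (proj1 S02 x), (proj1 S1 x). reflexivity. }
      apply climit_ratio; auto.
Qed.
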